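(* Let $L$ be the regular language over $\{0,1\}$ given by the regular expression \[ L = 1 + 011 + 110 + 11(01)^*\Bigl[00 + 00(11)^+ + (11)^+00 + (11)^*1011 + 1101(11)^*\Bigr](10)^*11 + 11(01)^*(11)^*01 + 10(11)^*(10)^*11 . \] Then a one-dimensional Peg Solitaire configuration $w\in\{0,1\}^*$ can be reduced to a configuration with exactly one peg if and only if $w \in 0^*L0^*$. In particular, the set of configurations reducible to a single peg is a regular language.
   Context: One-dimensional Peg Solitaire: a configuration is a finite word $w=c_0c_1\cdots c_{n-1}\in\{0,1\}^*$, describing a row of $n$ consecutive sites, where $c_i=1$ means site $i$ holds a peg and $c_i=0$ means site $i$ is a hole. The board consists exactly of these $n$ sites (no sites outside the word may be used). A move (hop) takes three consecutive sites $i,i+1,i+2$ (all within the board) such that one end site and the middle site hold pegs and the other end site is a hole, moves the end peg to the hole, and removes the peg from the middle site (i.e. $110\to001$ or $011\to100$ on those three sites). A configuration can be reduced to one peg if some sequence of hops leads to a configuration with exactly one peg. In regular expressions, $+$ denotes union, $u^*$ denotes zero or more repetitions of $u$, $u^+=uu^*$, and concatenation is juxtaposition. *)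

(* Defs.v *)
From mathcomp Require Import all_boot.
Set Implicit Arguments. Unset Strict Implicit. Unset Printing Implicit Defensive.

(* Configurations: words over {0,1}, encoded as seq bool (true = peg = 1). *)
Definition config := seq bool.

Definition hop (w w' : config) : Prop :=
  exists u v : config,
    (w = u ++ [:: true; true; false] ++ v /\ w' = u ++ [:: false; false; true] ++ v) \/
    (w = u ++ [:: false; true; true] ++ v /\ w' = u ++ [:: true; false; false] ++ v).

Inductive reach : config -> config -> Prop :=
| reach_refl w : reach w w
| reach_step w1 w2 w3 : hop w1 w2 -> reach w2 w3 -> reach w1 w3.

Definition reducible_to_one (w : config) : Prop :=
  exists w', reach w w' /\ count id w' = 1.

Inductive regex :=
| REps
| RChr of bool
| RAlt of regex & regex
| RCat of regex & regex
| RStar of regex.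

Inductive matches : regex -> config -> Prop :=
| m_eps : matches REps [::]
| m_chr b : matches (RChr b) [:: b]
| m_altl r s w : matches r w -> matches (RAlt r s) w
| m_altr r s w : matches s w -> matches (RAlt r s) w
| m_cat r s u v : matches r u -> matches s v -> matches (RCat r s) (u ++ v)
| m_star0 r : matches (RStar r) [::]
| m_starS r u v : matches r u -> matches (RStar r) v -> matches (RStar r) (u ++ v).

Definition RPlus (r : regex) : regex := RCat r (RStar r).

Fixpoint RWord (s : seq bool) : regex :=
  match s with [::] => REps | [:: b] => RChr b | b :: s' => RCat (RChr b) (RWord s') end.

Notation "'w0'" := false (only parsing).
Notation "'w1'" := true (only parsing).

Definition bracket : regex :=
  RAlt (RWord [:: w0; w0])
  (RAlt (RCat (RWord [:: w0; w0]) (RPlus (RWord [:: w1; w1])))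
  (RAlt (RCat (RPlus (RWord [:: w1; w1])) (RWord [:: w0; w0]))
  (RAlt (RCat (RStar (RWord [:: w1; w1])) (RWord [:: w1; w0; w1; w1]))
        (RCat (RWord [:: w1; w1; w0; w1]) (RStar (RWord [:: w1; w1])))))).

Definition L : regex :=
  RAlt (RWord [:: w1])
  (RAlt (RWord [:: w0; w1; w1])
  (RAlt (RWord [:: w1; w1; w0])
  (RAlt (RCat (RWord [:: w1; w1]) (RCat (RStar (RWord [:: w0; w1]))
          (RCat bracket (RCat (RStar (RWord [:: w1; w0])) (RWord [:: w1; w1])))))
  (RAlt (RCat (RWord [:: w1; w1]) (RCat (RStar (RWord [:: w0; w1]))
          (RCat (RStar (RWord [:: w1; w1])) (RWord [:: w0; w1]))))
        (RCat (RWord [:: w1; w0]) (RCat (RStar (RWord [:: w1; w1]))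
          (RCat (RStar (RWord [:: w1; w0])) (RWord [:: w1; w1])))))))).

Definition L_padded : regex :=
  RCat (RStar (RChr false)) (RCat L (RStar (RChr false))).

(* Main.v *)
From HB Require Import structures.
Require Import Defs.
From mathcomp Require Import all_boot.
From Stdlib Require Import Setoid.

Set Implicit Arguments. Unset Strict Implicit. Unset Printing Implicit Defensive.

Fixpoint reqb (r s : regex) : bool :=
  match r, s with
  | REps, REps => true
  | RChr a, RChr b => a == b
  | RAlt r1 r2, RAlt s1 s2 => reqb r1 s1 && reqb r2 s2
  | RCat r1 r2, RCat s1 s2 => reqb r1 s1 && reqb r2 s2
  | RStar r1, RStar s1 => reqb r1 s1
  | _, _ => false end.

Lemma reqbP : Equality.axiom reqb.
Proof.
elim=> [|a|r1 IH1 r2 IH2|r1 IH1 r2 IH2|r1 IH1] [|b|s1 s2|s1 s2|s1] /=;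
  try by constructor.
- by apply: (iffP eqP) => [->|[]].
- by case: (IH1 s1) => [->|N1]; case: (IH2 s2) => [->|N2]; constructor; congruence.
- by case: (IH1 s1) => [->|N1]; case: (IH2 s2) => [->|N2]; constructor; congruence.
- by apply: (iffP (IH1 s1)) => [->|[]].
Qed.

HB.instance Definition _ := hasDecEq.Build regex reqbP.

Fixpoint nu r := match r with
  | REps => true | RChr _ => false | RAlt r s => nu r || nu s
  | RCat r s => nu r && nu s | RStar _ => true end.

Fixpoint pd (b : bool) r : seq regex := match r with
 | REps => [::]
 | RChr c => if c == b then [:: REps] else [::]
 | RAlt r s => pd b r ++ pd b s
 | RCat r s => map (fun x => RCat x s) (pd b r) ++ (if nu r then pd b s else [::])
 | RStar r1 => map (fun x => RCat x (RStar r1)) (pd b r1) end.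

Lemma nu_matches r : matches r [::] -> nu r.
Proof.
move Hw: [::] => w H; elim: H Hw => //=.
- by move=> r0 s w0 _ IH /IH ->.
- by move=> r0 s w0 _ IH /IH ->; rewrite orbT.
- move=> r0 s u v _ IHu _ IHv; case: u IHu => // IHu; case: v IHv => // IHv _.
  by rewrite IHu ?IHv.
Qed.

Lemma matches_nu r : nu r -> matches r [::].
Proof.
elim: r => //=.
- constructor.
- by move=> r IHr s IHs /orP[/IHr|/IHs] H; [apply: m_altl|apply: m_altr].
- by move=> r IHr s IHs /andP[/IHr H1 /IHs H2]; rewrite -[[::]]cat0s; constructor.
- move=> r _ _; constructor.
Qed.

Lemma pd_sound b r x w : x \in pd b r -> matches x w -> matches r (b :: w).
Proof.
elim: r x w => [|c|r IHr s IHs|r IHr s IHs|r IHr] x w /=.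
- by [].
- case: eqP => // -> ; rewrite inE => /eqP -> H; inversion H; constructor.
- rewrite mem_cat => /orP[] H1 H2; [apply m_altl|apply m_altr]; eauto.
- rewrite mem_cat => /orP[/mapP[y Hy ->] H|].
    inversion H; subst; rewrite -cat_cons; constructor; eauto.
  case: ifP => // Hn H1 H2; rewrite -[b :: w]cat0s; constructor; last by eauto.
  exact: matches_nu.
- case/mapP=> y Hy -> H; inversion H; subst; rewrite -cat_cons; constructor; eauto.
Qed.

Lemma pd_complete r w : matches r w -> forall b w', w = b :: w' ->
  exists2 x, x \in pd b r & matches x w'.
Proof.
elim=> {r w} //=.
- move=> c b w' [-> <-]; exists REps; first by rewrite eqxx inE.
  constructor.
- move=> r s w _ IH b w' /IH [x Hx Hm]; exists x => //; by rewrite mem_cat Hx.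
- move=> r s w _ IH b w' /IH [x Hx Hm]; exists x => //; by rewrite mem_cat Hx orbT.
- move=> r s [|c u] v Hu IHu Hv IHv b w' /=.
    move=> Hvw; have [x Hx Hm] := IHv b w' Hvw; exists x => //.
    by rewrite mem_cat (nu_matches Hu) Hx orbT.
  case=> <- <-; have [x Hx Hm] := IHu c u erefl.
  exists (RCat x s); first by rewrite mem_cat map_f.
  by constructor.
- move=> r [|c u] v Hu IHu Hv IHv b w' /=.
    by move=> Hvw; have [x Hx Hm] := IHv b w' Hvw; exists x.
  case=> <- <-; have [x Hx Hm] := IHu c u erefl.
  exists (RCat x (RStar r)); first by rewrite map_f.
  by constructor.
Qed.

Definition langS (S : seq regex) w := exists2 x, x \in S & matches x w.
Definition stepS b (S : seq regex) := undup (flatten (map (pd b) S)).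
Definition finS (S : seq regex) := has nu S.

Lemma langS_nil S : langS S [::] <-> finS S.
Proof.
split.
- by case=> x Hx /nu_matches Hn; apply/hasP; exists x.
- by case/hasP=> x Hx /matches_nu; exists x.
Qed.

Lemma langS_cons S b w : langS S (b :: w) <-> langS (stepS b S) w.
Proof.
split.
- case=> x Hx /pd_complete /(_ b w erefl) [y Hy Hm]; exists y => //.
  by rewrite mem_undup; apply/flatten_mapP; exists x.
- case=> y; rewrite mem_undup => /flatten_mapP [x Hx Hy] Hm; exists x => //.
  exact: pd_sound Hy Hm.
Qed.

Lemma langS_eq S T w : S =i T -> langS S w -> langS T w.
Proof. by move=> E [x Hx Hm]; exists x; rewrite // -E. Qed.

Definition seteq (S T : seq regex) := all (mem T) S && all (mem S) T.

Lemma seteqP S T : seteq S T -> S =i T.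
Proof.
case/andP=> /allP H1 /allP H2 x; apply/idP/idP; [exact: H1|exact: H2].
Qed.

Fixpoint explore (fuel : nat) (tbl : seq (seq regex)) (i : nat) : seq (seq regex) :=
  match fuel with
  | 0 => tbl
  | fuel'.+1 =>
    if i < size tbl then
      let X := nth [::] tbl i in
      let add t Y := if has (seteq Y) t then t else rcons t Y in
      explore fuel' (add (add tbl (stepS false X)) (stepS true X)) i.+1
    else tbl
  end.

Definition tbl := Eval vm_compute in explore 200 [:: [:: L_padded]] 0.
Definition ntbl := size tbl.
Definition dtbl := Eval vm_compute in
  [seq (find (seteq (stepS false X)) tbl, find (seteq (stepS true X)) tbl) | X <- tbl].

Definition delta (i : nat) (b : bool) : nat :=
  let p := nth (0,0) dtbl i in if b then p.2 else p.1.
Definition fin (i : nat) := finS (nth [::] tbl i).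
Definition run (i : nat) (w : seq bool) := foldl delta i w.

Definition dfa_ok :=
  all (fun i => all (fun b => (delta i b < ntbl) &&
        seteq (stepS b (nth [::] tbl i)) (nth [::] tbl (delta i b))) [:: false; true])
      (iota 0 ntbl).

Lemma dfa_ok_true : dfa_ok = true.
Proof. vm_compute; reflexivity. Qed.

Lemma dfa_step i b : i < ntbl -> (delta i b < ntbl) /\
  stepS b (nth [::] tbl i) =i nth [::] tbl (delta i b).
Proof.
move=> Hi; have := dfa_ok_true; rewrite /dfa_ok => /allP /(_ i).
rewrite mem_iota add0n Hi => /(_ isT) /allP /(_ b).
rewrite inE; case: b => /= /(_ isT) /andP [-> /seteqP] //.
Qed.

Lemma run_lt i w : i < ntbl -> run i w < ntbl.
Proof.
elim: w i => //= b w IH i Hi; apply: IH; exact: (dfa_step b Hi).1.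
Qed.

Lemma langS_run i w : i < ntbl -> langS (nth [::] tbl i) w <-> fin (run i w).
Proof.
elim: w i => [|b w IH] i Hi; first exact: langS_nil.
have [Hl He] := dfa_step b Hi.
rewrite /= -IH //; split.
- by move/langS_cons; apply: langS_eq.
- by move=> H; apply/langS_cons; apply: langS_eq H => x; rewrite He.
Qed.

Lemma tbl0 : nth [::] tbl 0 = [:: L_padded].
Proof. vm_compute; reflexivity. Qed.

Lemma ntbl_pos : 0 < ntbl.
Proof. vm_compute; reflexivity. Qed.

Lemma matches_run w : matches L_padded w <-> fin (run 0 w).
Proof.
rewrite -langS_run ?ntbl_pos // tbl0; split.
- by move=> H; exists L_padded; rewrite ?inE.
- by case=> x; rewrite inE => /eqP ->.
Qed.

Lemma run_cat i x y : run i (x ++ y) = run (run i x) y.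
Proof. by rewrite /run foldl_cat. Qed.

Fixpoint close (T : eqType) (f : T -> seq T) (fuel : nat) (todo seen : seq T) : seq T :=
  match fuel with 0 => seen | fuel'.+1 =>
   match todo with [::] => seen | x :: todo' =>
     if x \in seen then close f fuel' todo' seen
     else close f fuel' (f x ++ todo') (x :: seen) end end.

(* ---------- property A: closure under inverse hops ---------- *)
Definition succP (p : nat * nat) :=
  [:: (delta p.1 false, delta p.2 false); (delta p.1 true, delta p.2 true)].
Definition initP := flatten [seq [:: (run i [:: false;false;true], run i [::true;true;false]);
   (run i [::true;false;false], run i [::false;true;true])] | i <- iota 0 ntbl].
Definition Pr := Eval vm_compute in close succP 10000 initP [::].
Definition chkA1 := all (fun p => p \in Pr) initP.
Definition chkA2 := all (fun p => (fin p.1 ==> fin p.2) && all (fun q => q \in Pr) (succP p)) Pr.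
Lemma chkA1_true : chkA1. Proof. vm_compute; reflexivity. Qed.
Lemma chkA2_true : chkA2. Proof. vm_compute; reflexivity. Qed.

Lemma simA v : forall p, p \in Pr -> fin (run p.1 v) -> fin (run p.2 v).
Proof.
elim: v => [|b v IH] p Hp; have /andP[H1 /allP H2] := allP chkA2_true p Hp.
  by move/(implyP H1).
have := IH (delta p.1 b, delta p.2 b); apply; by case: b; apply: H2; rewrite !inE eqxx ?orbT.
Qed.

Lemma hop_back w w' : hop w w' -> fin (run 0 w') -> fin (run 0 w).
Proof.
case=> u [v [[-> ->]|[-> ->]]]; rewrite !run_cat;
have Hi : run 0 u < ntbl by apply: run_lt; exact: ntbl_pos.
- apply: (simA (p := (run (run 0 u) [:: false;false;true], run (run 0 u) [::true;true;false]))).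
  apply: (allP chkA1_true); apply/flatten_mapP; exists (run 0 u); last by rewrite inE eqxx.
  by rewrite mem_iota.
- apply: (simA (p := (run (run 0 u) [:: true;false;false], run (run 0 u) [::false;true;true]))).
  apply: (allP chkA1_true); apply/flatten_mapP; exists (run 0 u); last by rewrite !inE eqxx orbT.
  by rewrite mem_iota.
Qed.

(* ---------- property B: forward hops ---------- *)
Definition nstep (p : nat * nat) (c : bool) : seq (nat * nat) :=
  let (q, ph) := p in
  match ph with
  | 0 => [:: (delta q c, 0); (if c then (delta q false, 1) else (delta q true, 3))]
  | 1 => if c then [:: (delta q false, 2)] else [::]
  | 2 => if c then [::] else [:: (delta q true, 5)]
  | 3 => if c then [:: (delta q false, 4)] else [::]
  | 4 => if c then [:: (delta q false, 5)] else [::]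
  | 5 => [:: (delta q c, 5)]
  | _ => [::]
  end.

Definition leqp (p q : nat * nat) := (p.1 < q.1) || ((p.1 == q.1) && (p.2 <= q.2)).
Definition norm (s : seq (nat * nat)) := undup (sort leqp s).
Definition bstep (s : nat * seq (nat * nat)) (c : bool) : nat * seq (nat * nat) :=
  (minn (s.1 + c) 2, norm (flatten [seq nstep p c | p <- s.2])).
Definition binit : nat * seq (nat * nat) := (0, [:: (0, 0)]).
Definition Bs := Eval vm_compute in
  close (fun s => [:: bstep s false; bstep s true]) 10000 [:: binit] [::].
Definition okB (s : nat * seq (nat * nat)) :=
  all (fun p => (p.2 == 0) ==> ((fin p.1 ==> (0 < s.1)) &&
     ((fin p.1 && (s.1 == 2)) ==> has (fun q => (q.2 == 5) && fin q.1) s.2))) s.2.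
Definition chkB1 := binit \in Bs.
Definition chkB2 := all (fun s => (bstep s false \in Bs) && (bstep s true \in Bs) && okB s) Bs.
Lemma chkB1_true : chkB1. Proof. vm_compute; reflexivity. Qed.
Lemma chkB2_true : chkB2. Proof. vm_compute; reflexivity. Qed.

Definition brun w := foldl bstep binit w.

Lemma brun_in w : brun w \in Bs.
Proof.
rewrite /brun; have := chkB1_true; rewrite /chkB1.
elim: w binit => // c w IH s Hs /=; apply: IH.
by have /andP[/andP[H1 H2] _] := allP chkB2_true s Hs; case: c.
Qed.

Definition Inv (w : seq bool) (p : nat * nat) : Prop :=
  let (q, ph) := p in
  match ph with
  | 0 => q = run 0 w
  | 1 => exists u, w = u ++ [:: true] /\ q = run 0 (u ++ [:: false])
  | 2 => exists u, w = u ++ [:: true; true] /\ q = run 0 (u ++ [:: false; false])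
  | 3 => exists u, w = u ++ [:: false] /\ q = run 0 (u ++ [:: true])
  | 4 => exists u, w = u ++ [:: false; true] /\ q = run 0 (u ++ [:: true; false])
  | 5 => exists w', hop w w' /\ q = run 0 w'
  | _ => False end.

Lemma hop_rcons w w' c : hop w w' -> hop (rcons w c) (rcons w' c).
Proof.
case=> u [v [[-> ->]|[-> ->]]]; exists u, (rcons v c); [left|right];
by rewrite !rcons_cat.
Qed.

Lemma Inv_step w p c p' : Inv w p -> p' \in nstep p c -> Inv (rcons w c) p'.
Proof.
case: p => q [|[|[|[|[|[|ph]]]]]] /=.
- move=> ->; rewrite !inE => /orP[/eqP-> /=|]; first by rewrite -cats1 run_cat.
  case: c => /eqP -> /=; exists w; by rewrite -cats1 run_cat.
- case=> u [-> ->]; case: c; rewrite ?inE // => /eqP -> /=.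
  by exists u; rewrite -cats1 -catA !run_cat.
- case=> u [-> ->]; case: c; rewrite ?inE // => /eqP -> /=.
  exists (u ++ [:: false; false; true]); rewrite !run_cat; split=> //.
  exists u, [::]; left; by rewrite -cats1 -catA.
- case=> u [-> ->]; case: c; rewrite ?inE // => /eqP -> /=.
  by exists u; rewrite -cats1 -catA !run_cat.
- case=> u [-> ->]; case: c; rewrite ?inE // => /eqP -> /=.
  exists (u ++ [:: true; false; false]); rewrite !run_cat; split=> //.
  exists u, [::]; right; by rewrite -cats1 -catA.
- case=> w' [Hh ->]; rewrite inE => /eqP -> /=; exists (rcons w' c); split.
    exact: hop_rcons.
  by rewrite -cats1 run_cat.
- by [].
Qed.

Lemma mem_bstep s c p' : p' \in (bstep s c).2 -> exists2 p, p \in s.2 & p' \in nstep p c.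
Proof. by rewrite /= /norm mem_undup mem_sort => /flatten_mapP. Qed.

Lemma brun_inv w : (brun w).1 = minn (count id w) 2 /\
  (forall p, p \in (brun w).2 -> Inv w p) /\ (run 0 w, 0) \in (brun w).2.
Proof.
elim/last_ind: w => [|w c [IH1 [IH2 IH3]]].
  split=> //; split; last by rewrite inE.
  by move=> p; rewrite inE => /eqP ->.
rewrite /brun foldl_rcons -/(brun w); split; last split.
- rewrite /= IH1 -cats1 count_cat /=; case: c; rewrite ?addn0 ?addn1;
  case: (count id w) => [|[|k]] //.
- move=> p' /mem_bstep [p Hp Hp']; exact: Inv_step (IH2 p Hp) Hp'.
- rewrite /= /norm mem_undup mem_sort; apply/flatten_mapP; exists (run 0 w, 0) => //.
  by rewrite /= -cats1 run_cat inE eqxx.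
Qed.

Lemma B_prop w : fin (run 0 w) -> 0 < count id w /\
  (1 < count id w -> exists w', hop w w' /\ fin (run 0 w')).
Proof.
move=> Hf; have [H1 [H2 H3]] := brun_inv w.
have /andP[_ /allP Hok] := allP chkB2_true _ (brun_in w).
have /= /andP[Ha Hb] := Hok _ H3; rewrite Hf /= in Ha Hb.
rewrite H1 in Ha Hb; split.
  by move: Ha; case: (count id w).
move=> Hc; have /eqP E : minn (count id w) 2 == 2.
  by move: Hc; case: (count id w) => [|[|k]].
rewrite E eqxx /= in Hb; case/hasP: Hb => [[q ph]] Hq /andP[/eqP /= Eph Hfq].
have := H2 _ Hq; rewrite Eph /= => -[w' [Hh Ew']]; exists w'; split=> //.
by rewrite -Ew'.
Qed.

Lemma hop_count w w' : hop w w' -> count id w = (count id w').+1.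
Proof.
case=> u [v [[-> ->]|[-> ->]]]; rewrite !count_cat /= !addSn !add0n ?addnS //.
Qed.

Lemma count0 w : count id w = 0 -> w = nseq (size w) false.
Proof. elim: w => //= [[]] w IH //= /IH {1}->. by []. Qed.

Lemma count1 w : count id w = 1 -> exists a b, w = nseq a false ++ true :: nseq b false.
Proof.
elim: w => //= [[]] w IH /=.
- by case=> /count0 ->; exists 0, (size w).
- rewrite add0n => /IH [a [b ->]]; by exists a.+1, b.
Qed.

Lemma star_false n : matches (RStar (RChr false)) (nseq n false).
Proof.
elim: n => [|n IH]; first exact: m_star0.
by rewrite -[nseq _ _]cat1s; apply: m_starS => //; exact: m_chr.
Qed.

Lemma one_peg w : count id w = 1 -> matches L_padded w.
Proof.
case/count1=> a [b ->]; apply: m_cat; first exact: star_false.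
rewrite -cat1s; apply: m_cat; last exact: star_false.
exact: (m_altl _ (m_chr true)).
Qed.

Theorem theorem1 (w : seq bool) :
  reducible_to_one w <-> matches L_padded w.
Proof.
split.
- case=> w' [Hr Hc]; elim: Hr Hc => [w0 Hc|w1 w2 w3 Hh Hr IH Hc].
    exact: one_peg.
  have := IH Hc; rewrite !matches_run => H; exact: hop_back Hh H.
- have [n Hn] : exists n, count id w <= n by exists (count id w).
  elim: n w Hn => [|n IH] w Hn /matches_run /B_prop [Hpos Hmore].
    by move: Hpos; rewrite lt0n -leqn0 Hn.
  case: (ltnP 1 (count id w)) => Hc.
    have [w' [Hh Hf]] := Hmore Hc.
    have Hc' := hop_count Hh.
    have [w'' [Hr Hc'']] : reducible_to_one w'.
      by apply: IH; [rewrite -ltnS -Hc'|apply/matches_run].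
    by exists w''; split => //; apply: reach_step Hh Hr.
  exists w; split; first exact: reach_refl.
  by apply/eqP; rewrite eqn_leq Hc Hpos.
Qed.
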